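(* There is a universal constant $c$ such that for every $0<\gamma<1$, every $f:\{0,1\}^n\to\{0,1\}$ and all sets $J,K\subseteq[n]$ with $|J|,|K|\ge(1-\gamma)n$, $$\mathrm{SymInf}_f(J\cup K)\le\mathrm{SymInf}_f(J)+\mathrm{SymInf}_f(K)+c\sqrt{\gamma}.$$
   Context: $\mathcal{S}_J$ is the set of permutations of $[n]$ fixing every element outside $J$; $\pi x$ is the vector whose $\pi(i)$-th coordinate is $x_i$. $\mathrm{SymInf}_f(J)=\Pr_{x,\pi}[f(x)\ne f(\pi x)]$ with $x$ uniform in $\{0,1\}^n$ and $\pi$ uniform in $\mathcal{S}_J$. *)

(* Defs.v *)
From HB Require Import structures.
From mathcomp Require Import all_boot all_order all_algebra all_fingroup.
From mathcomp Require Import Rstruct.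
From Stdlib Require Import Rdefinitions.
Set Implicit Arguments. Unset Strict Implicit. Unset Printing Implicit Defensive.
Import Order.TTheory GRing.Theory Num.Theory.
Local Open Scope ring_scope.

(* pi x : the vector whose pi(i)-th coordinate is x_i, i.e. (pi x)_j = x_{pi^-1 j} *)
Definition permx (n : nat) (s : {perm 'I_n}) (x : {ffun 'I_n -> bool})
  : {ffun 'I_n -> bool} := [ffun j => x (s^-1%g j)].

Definition SymGroup (n : nat) (J : {set 'I_n}) : {set {perm 'I_n}} :=
  [set s : {perm 'I_n} | perm_on J s].

Definition SymInf (n : nat) (f : {ffun 'I_n -> bool} -> bool) (J : {set 'I_n}) : R :=
  (#|[set p : {ffun 'I_n -> bool} * {perm 'I_n} |
       (p.2 \in SymGroup J) && (f p.1 != f (permx p.2 p.1))]|%:R)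
  / ((#|{ffun 'I_n -> bool}| * #|SymGroup J|)%N%:R).

(* Main.v *)
Require Import Defs.
From HB Require Import structures.
From mathcomp Require Import all_boot all_order all_algebra all_fingroup.
From mathcomp Require Import Rstruct.
From mathcomp Require Import ring lra.
Local Notation R := Rdefinitions.R.
Set Implicit Arguments. Unset Strict Implicit. Unset Printing Implicit Defensive.
Import Order.TTheory GRing.Theory Num.Theory.
Local Open Scope ring_scope.

Lemma permxE n (s : {perm 'I_n}) x i : permx s x i = x (s^-1%g i).
Proof. by rewrite /permx ffunE. Qed.

Lemma permx_mul n (s t : {perm 'I_n}) x : permx t (permx s x) = permx (s * t)%g x.
Proof. by apply/ffunP => i; rewrite !permxE invMg permM. Qed.

Lemma permx1 n (x : {ffun 'I_n -> bool}) : permx 1%g x = x.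
Proof. by apply/ffunP => i; rewrite permxE invg1 perm1. Qed.

Lemma permxK n (s : {perm 'I_n}) x : permx s^-1%g (permx s x) = x.
Proof. by rewrite permx_mul mulgV permx1. Qed.

Lemma permxKV n (s : {perm 'I_n}) x : permx s (permx s^-1%g x) = x.
Proof. by rewrite permx_mul mulVg permx1. Qed.

Definition wt n (A : {set 'I_n}) (x : {ffun 'I_n -> bool}) := #|[set i in A | x i]|.

Lemma wt_permx n (A : {set 'I_n}) s x : perm_on A s -> wt A (permx s x) = wt A x.
Proof.
move=> pA; rewrite /wt.
have -> : [set i in A | permx s x i] = s @: [set i in A | x i].
  apply/setP => i; rewrite inE permxE.
  apply/idP/imsetP => [/andP[iA xi]|[j]].
    exists (s^-1%g i); last by rewrite permKV.
    by rewrite inE xi (perm_closed _ (perm_onV pA)) iA.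
  by rewrite inE => /andP[jA xj] ->; rewrite permK xj (perm_closed _ pA) jA.
by rewrite card_imset //; apply: perm_inj.
Qed.

Lemma permx_out n (A : {set 'I_n}) s x i : perm_on A s -> i \notin A -> permx s x i = x i.
Proof.
move=> pA iA; rewrite permxE; congr (x _).
by rewrite (out_perm (perm_onV pA) iA).
Qed.

Lemma transitive_lemma n (A : {set 'I_n}) (y y' : {ffun 'I_n -> bool}) :
  (forall i, i \notin A -> y i = y' i) -> wt A y = wt A y' ->
  exists2 s, perm_on A s & y' = permx s y.
Proof.
move Hk : #|[set i in A | y i && ~~ y' i]| => k.
elim: k y Hk => [|k IH] y Hk Hout Hw.
  exists 1%g; first exact: perm_on1.
  rewrite permx1; apply/ffunP => i.
  case: (boolP (i \in A)) => iA; last by rewrite Hout.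
  have sub : [set i in A | y i] \subset [set i in A | y' i].
    apply/subsetP => j; rewrite !inE => /andP[jA yj]; rewrite jA /=.
    apply/negPn/negP => ny'.
    have : j \in [set i in A | y i && ~~ y' i] by rewrite inE jA yj ny'.
    by move/eqP: Hk; rewrite cards_eq0 => /eqP ->; rewrite inE.
  have eqs : [set i in A | y i] = [set i in A | y' i].
    by apply/eqP; rewrite eqEcard sub /= -/(wt A y') -/(wt A y) Hw.
  by move/setP: eqs => /(_ i); rewrite !inE iA /=.
have : (0 < #|[set i in A | y i && ~~ y' i]|)%nat by rewrite Hk.
rewrite card_gt0 => /set0Pn [a]; rewrite inE => /andP[aA /andP[ya ny'a]].
have [b] : exists b, [&& b \in A, ~~ y b & y' b].
  case: (boolP [exists b, [&& b \in A, ~~ y b & y' b]]) => [/existsP //|/existsPn Hb]; exfalso.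
  have sub : [set i in A | y' i] \subset [set i in A | y i].
    apply/subsetP => j; rewrite !inE => /andP[jA y'j]; rewrite jA /=.
    by move: (Hb j); rewrite jA y'j andbT /= negbK.
  have : [set i in A | y' i] \proper [set i in A | y i].
    rewrite properEneq sub andbT; apply/eqP => E.
    by move/setP: E => /(_ a); rewrite !inE aA ya /= => H; rewrite H in ny'a.
  by move/proper_card; rewrite -/(wt A y') -/(wt A y) Hw ltnn.
move=> /and3P[bA nyb y'b].
have ab : a != b by apply/eqP => E; move: ya; rewrite E (negbTE nyb).
pose t := tperm a b.
have pt : perm_on A t.
  by apply: subset_trans (tperm_on a b) _; apply/subsetP => i; rewrite !inE => /orP[] /eqP ->.
pose z := permx t y.
have zE i : z i = y (t i) by rewrite /z permxE tpermV.
have Hk' : #|[set i in A | z i && ~~ y' i]| = k.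
  have -> : [set i in A | z i && ~~ y' i] = [set i in A | y i && ~~ y' i] :\ a.
    apply/setP => i; rewrite !inE zE.
    case: (tpermP a b i) => [->|->|/eqP ia /eqP ib].
    - by rewrite eqxx (negbTE nyb) !andbF.
    - by rewrite y'b (negbTE nyb) !andbF.
    - by rewrite ia.
  by move: Hk; rewrite (cardsD1 a) inE aA ya ny'a /= add1n => -[].
have H1 : forall i, i \notin A -> z i = y' i.
  by move=> i iA; rewrite /z (permx_out _ pt iA) Hout.
have H2 : wt A z = wt A y' by rewrite /z wt_permx.
have [s ps Es] := IH z Hk' H1 H2.
exists (t * s)%g; first exact: perm_onM.
by rewrite Es /z permx_mul.
Qed.


Lemma inSG n (S : {set 'I_n}) s : (s \in SymGroup S) = perm_on S s.
Proof. by rewrite inE. Qed.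
Lemma SG1 n (S : {set 'I_n}) : (1%g : {perm 'I_n}) \in SymGroup S.
Proof. by rewrite inSG perm_on1. Qed.
Lemma SGM n (S : {set 'I_n}) s t : s \in SymGroup S -> t \in SymGroup S -> (s * t)%g \in SymGroup S.
Proof. by rewrite !inSG; apply: perm_onM. Qed.
Lemma SGV n (S : {set 'I_n}) s : s \in SymGroup S -> s^-1%g \in SymGroup S.
Proof. by rewrite !inSG; apply: perm_onV. Qed.
Lemma SGVE n (S : {set 'I_n}) s : (s^-1%g \in SymGroup S) = (s \in SymGroup S).
Proof. by apply/idP/idP => /SGV //; rewrite invgK. Qed.
Lemma SGMl n (S : {set 'I_n}) a s : a \in SymGroup S -> ((a * s)%g \in SymGroup S) = (s \in SymGroup S).
Proof.
move=> Ha; apply/idP/idP => [H|]; last exact: SGM.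
by rewrite -(mulKg a s); apply: SGM => //; apply: SGV.
Qed.
Lemma SGMr n (S : {set 'I_n}) a s : a \in SymGroup S -> ((s * a)%g \in SymGroup S) = (s \in SymGroup S).
Proof.
move=> Ha; apply/idP/idP => [H|H]; last exact: SGM.
by rewrite -(mulgK a s); apply: SGM => //; apply: SGV.
Qed.

Lemma SG_sub n (A B : {set 'I_n}) s : A \subset B -> s \in SymGroup A -> s \in SymGroup B.
Proof. by rewrite !inSG => AB /subset_trans; apply. Qed.

Definition avgG n (S : {set 'I_n}) (F : {perm 'I_n} -> R) : R :=
  (\sum_(s in SymGroup S) F s) / #|SymGroup S|%:R.
Definition avgX n (F : {ffun 'I_n -> bool} -> R) : R :=
  (\sum_x F x) / #|{ffun 'I_n -> bool}|%:R.

Lemma cardSG_gt0 n (S : {set 'I_n}) : (0 < #|SymGroup S|)%nat.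
Proof. by apply/card_gt0P; exists 1%g; apply: SG1. Qed.
Lemma cardX_gt0 n : (0 < #|{ffun 'I_n -> bool}|)%nat.
Proof. by apply/card_gt0P; exists [ffun => false]. Qed.

Lemma sumSG_mull n (S : {set 'I_n}) a (F : {perm 'I_n} -> R) : a \in SymGroup S ->
  \sum_(s in SymGroup S) F (a * s)%g = \sum_(s in SymGroup S) F s.
Proof.
move=> Ha; rewrite [RHS]big_mkcond [RHS](reindex_inj (mulgI a)) [LHS]big_mkcond /=.
by apply: eq_bigr => s _; rewrite SGMl.
Qed.
Lemma sumSG_mulr n (S : {set 'I_n}) a (F : {perm 'I_n} -> R) : a \in SymGroup S ->
  \sum_(s in SymGroup S) F (s * a)%g = \sum_(s in SymGroup S) F s.
Proof.
move=> Ha; rewrite [RHS]big_mkcond [RHS](reindex_inj (mulIg a)) [LHS]big_mkcond /=.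
by apply: eq_bigr => s _; rewrite SGMr.
Qed.
Lemma sumSG_inv n (S : {set 'I_n}) (F : {perm 'I_n} -> R) :
  \sum_(s in SymGroup S) F (s^-1)%g = \sum_(s in SymGroup S) F s.
Proof.
rewrite [RHS]big_mkcond [RHS](reindex_inj invg_inj) [LHS]big_mkcond /=.
by apply: eq_bigr => s _; rewrite SGVE.
Qed.

Lemma avgG_mull n (S : {set 'I_n}) a F : a \in SymGroup S ->
  avgG S (fun s => F (a * s)%g) = avgG S F.
Proof. by move=> Ha; rewrite /avgG sumSG_mull. Qed.
Lemma avgG_mulr n (S : {set 'I_n}) a F : a \in SymGroup S ->
  avgG S (fun s => F (s * a)%g) = avgG S F.
Proof. by move=> Ha; rewrite /avgG sumSG_mulr. Qed.
Lemma avgG_inv n (S : {set 'I_n}) F : avgG S (fun s => F (s^-1)%g) = avgG S F.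
Proof. by rewrite /avgG sumSG_inv. Qed.

Lemma avgG_const n (S : {set 'I_n}) c : avgG S (fun _ => c) = c.
Proof.
rewrite /avgG sumr_const -[c *+ _]mulr_natr mulfK //.
by rewrite pnatr_eq0 -lt0n cardSG_gt0.
Qed.
Lemma avgX_const n c : avgX (n:=n) (fun _ => c) = c.
Proof.
rewrite /avgX sumr_const -[c *+ _]mulr_natr mulfK //.
by rewrite pnatr_eq0 -lt0n cardX_gt0.
Qed.

Lemma avgG_ext n (S : {set 'I_n}) F1 F2 : (forall s, s \in SymGroup S -> F1 s = F2 s) ->
  avgG S F1 = avgG S F2.
Proof. by move=> H; rewrite /avgG (eq_bigr _ H). Qed.
Lemma avgX_ext n (F1 F2 : {ffun 'I_n -> bool} -> R) : (forall x, F1 x = F2 x) ->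
  avgX F1 = avgX F2.
Proof. by move=> H; rewrite /avgX (eq_bigr _ (fun x _ => H x)). Qed.

Lemma avgG_le n (S : {set 'I_n}) F1 F2 : (forall s, s \in SymGroup S -> F1 s <= F2 s) ->
  avgG S F1 <= avgG S F2.
Proof.
move=> H; rewrite /avgG ler_pM2r ?invr_gt0 ?ltr0n ?cardSG_gt0 //.
by apply: ler_sum.
Qed.
Lemma avgX_le n (F1 F2 : {ffun 'I_n -> bool} -> R) : (forall x, F1 x <= F2 x) ->
  avgX F1 <= avgX F2.
Proof.
move=> H; rewrite /avgX ler_pM2r ?invr_gt0 ?ltr0n ?cardX_gt0 //.
by apply: ler_sum => x _.
Qed.

Lemma avgG_add n (S : {set 'I_n}) F1 F2 :
  avgG S (fun s => F1 s + F2 s) = avgG S F1 + avgG S F2.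
Proof. by rewrite /avgG big_split mulrDl. Qed.
Lemma avgX_add n (F1 F2 : {ffun 'I_n -> bool} -> R) :
  avgX (fun s => F1 s + F2 s) = avgX F1 + avgX F2.
Proof. by rewrite /avgX big_split mulrDl. Qed.
Lemma avgG_sub n (S : {set 'I_n}) F1 F2 :
  avgG S (fun s => F1 s - F2 s) = avgG S F1 - avgG S F2.
Proof. by rewrite /avgG sumrB mulrBl. Qed.
Lemma avgX_sub n (F1 F2 : {ffun 'I_n -> bool} -> R) :
  avgX (fun s => F1 s - F2 s) = avgX F1 - avgX F2.
Proof. by rewrite /avgX sumrB mulrBl. Qed.
Lemma avgX_scale n c (F : {ffun 'I_n -> bool} -> R) :
  avgX (fun s => c * F s) = c * avgX F.
Proof. by rewrite /avgX -mulr_sumr mulrA. Qed.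

Lemma avgG_norm n (S : {set 'I_n}) F : `|avgG S F| <= avgG S (fun s => `|F s|).
Proof.
rewrite /avgG normrM normfV normr_nat ler_pM2r ?invr_gt0 ?ltr0n ?cardSG_gt0 //.
exact: ler_norm_sum.
Qed.
Lemma avgX_norm n (F : {ffun 'I_n -> bool} -> R) : `|avgX F| <= avgX (fun s => `|F s|).
Proof.
rewrite /avgX normrM normfV normr_nat ler_pM2r ?invr_gt0 ?ltr0n ?cardX_gt0 //.
exact: ler_norm_sum.
Qed.

Lemma avgXG_swap n (S : {set 'I_n}) (F : {ffun 'I_n -> bool} -> {perm 'I_n} -> R) :
  avgX (fun x => avgG S (F x)) = avgG S (fun s => avgX (fun x => F x s)).
Proof.
rewrite /avgX /avgG -mulr_suml exchange_big /= -mulr_suml.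
by rewrite -!mulrA [X in _ * X]mulrC.
Qed.
Lemma avgGG_swap n (S T : {set 'I_n}) (F : {perm 'I_n} -> {perm 'I_n} -> R) :
  avgG S (fun s => avgG T (F s)) = avgG T (fun t => avgG S (fun s => F s t)).
Proof.
rewrite /avgG -mulr_suml exchange_big /= -mulr_suml.
by rewrite -!mulrA [X in _ * X]mulrC.
Qed.
Lemma avgXX_swap n (F : {ffun 'I_n -> bool} -> {ffun 'I_n -> bool} -> R) :
  avgX (fun x => avgX (F x)) = avgX (fun y => avgX (fun x => F x y)).
Proof.
rewrite /avgX -mulr_suml exchange_big /= -mulr_suml.
by rewrite -!mulrA [X in _ * X]mulrC.
Qed.

Lemma avgX_bij n (h : {ffun 'I_n -> bool} -> {ffun 'I_n -> bool}) F :
  injective h -> avgX (fun x => F (h x)) = avgX F.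
Proof. by move=> hi; rewrite /avgX [in RHS](reindex_inj hi). Qed.


Definition merge n (E : {set 'I_n}) (y r : {ffun 'I_n -> bool}) : {ffun 'I_n -> bool} :=
  [ffun i => if i \in E then y i else r i].

Lemma avgXX_merge n (E : {set 'I_n}) (H : {ffun 'I_n -> bool} -> {ffun 'I_n -> bool} -> R) :
  avgX (fun y => avgX (fun r => H (merge E y r) (merge E r y))) = avgX (fun u => avgX (fun v => H u v)).
Proof.
rewrite /avgX -!mulr_suml !pair_big /=; congr (_ * _ * _).
pose h (p : {ffun 'I_n -> bool} * {ffun 'I_n -> bool}) := (merge E p.1 p.2, merge E p.2 p.1).
have hK : involutive h.
  move=> [y r]; rewrite /h /=; congr (_, _); apply/ffunP => i; rewrite !ffunE;
  by case: (i \in E).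
rewrite [RHS](reindex_inj (inv_inj hK)) /=.
by apply: eq_bigr => -[y r] _.
Qed.

Definition Tavg n (E : {set 'I_n}) (F : {ffun 'I_n -> bool} -> R) y :=
  avgX (fun r => F (merge E y r)).

Lemma T_total n (E : {set 'I_n}) F : avgX (fun y => Tavg E F y) = avgX F.
Proof.
have := avgXX_merge E (fun u v => F u); rewrite /Tavg => ->.
by apply: avgX_ext => u; rewrite avgX_const.
Qed.

Lemma T_diag n (E : {set 'I_n}) (Fam : {ffun 'I_n -> bool} -> {ffun 'I_n -> bool} -> R) :
  (forall y y' z : {ffun 'I_n -> bool}, (forall i, i \in E -> y i = y' i) -> Fam y z = Fam y' z) ->
  avgX (fun y => Fam y y) = avgX (fun y => Tavg E (Fam y) y).
Proof.
move=> HF.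
have E1 y r z : Fam y z = Fam (merge E y r) z.
  by apply: HF => i iE; rewrite ffunE iE.
transitivity (avgX (fun y => avgX (fun r => Fam (merge E y r) (merge E y r)))).
  have := avgXX_merge E (fun u v => Fam u u) => ->.
  by apply: avgX_ext => u; rewrite avgX_const.
by apply: avgX_ext => y; rewrite /Tavg; apply: avgX_ext => r; rewrite -E1.
Qed.

Lemma avgX_sum n (V : {set 'I_n}) (G : 'I_n -> {ffun 'I_n -> bool} -> R) :
  avgX (fun r => \sum_(p in V) G p r) = \sum_(p in V) avgX (G p).
Proof. by rewrite /avgX exchange_big /= mulr_suml. Qed.

Definition flip n (p : 'I_n) (r : {ffun 'I_n -> bool}) : {ffun 'I_n -> bool} :=
  [ffun i => if i == p then ~~ r p else r i].

Lemma flipK n (p : 'I_n) : involutive (flip p).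
Proof.
move=> r; apply/ffunP => i; rewrite !ffunE.
by case: (eqVneq i p) => [->|]; rewrite ?eqxx ?negbK.
Qed.

Lemma wt_sum n (V : {set 'I_n}) r : (wt V r)%:R = \sum_(p in V) ((r p)%:R : R).
Proof.
rewrite /wt -sum1_card natr_sum big_mkcond [RHS]big_mkcond /=.
by apply: eq_bigr => i _; rewrite inE; case: (i \in V); case: (r i).
Qed.

Lemma wt_le n (V : {set 'I_n}) r : (wt V r <= #|V|)%nat.
Proof. by apply: subset_leq_card; apply/subsetP => i; rewrite inE => /andP[]. Qed.

Lemma variance n (V : {set 'I_n}) :
  avgX (fun r => ((wt V r)%:R - #|V|%:R / 2) ^+ 2 : R) = #|V|%:R / 4.
Proof.
have e1 r : (wt V r)%:R - #|V|%:R / 2 = \sum_(p in V) (((r p)%:R : R) - 1/2).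
  by rewrite wt_sum sumrB sumr_const -[1/2 *+ _]mulr_natl mul1r.
transitivity (avgX (fun r => \sum_(p in V) \sum_(q in V) ((((r p)%:R : R) - 1/2) * ((r q)%:R - 1/2)))).
  apply: avgX_ext => r; rewrite e1 expr2 mulr_suml; apply: eq_bigr => p _.
  by rewrite mulr_sumr.
rewrite avgX_sum.
transitivity (\sum_(p in V) (1/4 : R)); last first.
  by rewrite sumr_const -[1/4 *+ _]mulr_natl mul1r.
apply: eq_bigr => p pV; rewrite avgX_sum (bigD1 p) //=.
rewrite big1 ?addr0.
  rewrite -[RHS](avgX_const n); apply: avgX_ext => r.
  by case: (r p); rewrite /=; field.
move=> q /andP[qV qp].
set G := (fun r : {ffun 'I_n -> bool} => _).
have : avgX G = - avgX G.
  rewrite -{1}(avgX_bij G (inv_inj (flipK p))) -mulN1r -avgX_scale.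
  apply: avgX_ext => r; rewrite /G !ffunE eqxx (negbTE qp).
  by case: (r p); rewrite /=; field.
move=> h; have : 2 * avgX G = 0 by rewrite mulr2n mulrDl mul1r {1}h addNr.
by move/eqP; rewrite mulf_eq0 pnatr_eq0 /= => /eqP.
Qed.

Lemma avgX_affine n (g : {ffun 'I_n -> bool} -> R) c k :
  avgX (fun r => (g r + c) * k) = (avgX g + c) * k.
Proof.
transitivity (avgX (fun r => k * g r + k * c)).
  by apply: avgX_ext => r; ring.
by rewrite avgX_add avgX_scale avgX_const; ring.
Qed.

Lemma abs_le_amgm (t a : R) : 0 < a -> `|t| <= (t ^+ 2 + a ^+ 2) / (2 * a).
Proof.
move=> a0; rewrite ler_pdivlMr ?mulr_gt0 //.
have h1 : t ^+ 2 = `|t| ^+ 2 by rewrite real_normK ?num_real.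
have := sqr_ge0 (`|t| - a); rewrite h1.
set u := `|t|; move=> h; nra.
Qed.

Lemma avg_abs_dev n (V : {set 'I_n}) :
  avgX (fun r => `|(wt V r)%:R - #|V|%:R / 2|) <= Num.sqrt (#|V|%:R : R) / 2.
Proof.
case: (posnP #|V|) => [V0|Vpos].
  have h r : ((wt V r)%:R : R) - #|V|%:R / 2 = 0.
    have -> : wt V r = 0%nat by apply/eqP; rewrite -leqn0 -V0 wt_le.
    by rewrite V0 mulr0n mul0r subr0.
  have -> : avgX (fun r => `|(wt V r)%:R - #|V|%:R / 2|) = avgX (n:=n) (fun r => (0 : R)).
    by apply: avgX_ext => r; rewrite h normr0.
  by rewrite avgX_const V0 mulr0n sqrtr0 mul0r.
set N : R := #|V|%:R.
have N0 : 0 < N by rewrite /N ltr0n.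
set a := Num.sqrt N / 2.
have a0 : 0 < a by rewrite /a divr_gt0 ?sqrtr_gt0.
apply: le_trans (avgX_le (fun r => abs_le_amgm ((wt V r)%:R - N / 2) a0)) _.
have -> : avgX (fun r => (((wt V r)%:R - N / 2) ^+ 2 + a ^+ 2) / (2 * a))
   = (avgX (fun r => ((wt V r)%:R - N / 2) ^+ 2) + a ^+ 2) / (2 * a).
  exact: avgX_affine.
rewrite variance -/N.
have sN : Num.sqrt N ^+ 2 = N by rewrite sqr_sqrtr // ltW.
have sN0 : 0 < Num.sqrt N by rewrite sqrtr_gt0.
rewrite /a.
have -> : (N / 4 + (Num.sqrt N / 2) ^+ 2) / (2 * (Num.sqrt N / 2)) = Num.sqrt N / 2.
  by rewrite -{1}sN; field; rewrite gt_eqF.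
by [].
Qed.


Lemma swap_merge n (E : {set 'I_n}) (y r : {ffun 'I_n -> bool}) j p :
  j \in E -> p \notin E -> y j -> r p ->
  permx (tperm j p) (merge E (flip j y) r) = merge E y (flip p r).
Proof.
move=> jE pE yj rp; apply/ffunP => i; rewrite permxE tpermV !ffunE.
case: (tpermP j p i) => [->|->|/eqP ij /eqP ip].
- by rewrite (negbTE pE) jE yj rp.
- by rewrite jE (negbTE pE) ?ffunE !eqxx yj rp.
- case: (boolP (i \in E)) => iE; rewrite ?ffunE.
  + by rewrite (negbTE ij).
  + by rewrite (negbTE ip).
Qed.

Lemma flip_identity n (S E : {set 'I_n}) (Fn : {ffun 'I_n -> bool} -> R) (y : {ffun 'I_n -> bool}) j p :
  E \subset S -> (forall s z, perm_on S s -> Fn (permx s z) = Fn z) ->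
  j \in E -> y j -> p \in S :\: E ->
  avgX (fun r => (~~ r p)%:R * Fn (merge E y r)) = avgX (fun r => (r p)%:R * Fn (merge E (flip j y) r)).
Proof.
move=> ES Finv jE yj; rewrite inE => /andP[pE pS].
rewrite -(avgX_bij _ (inv_inj (flipK p))); apply: avgX_ext => r.
rewrite [in LHS]ffunE eqxx negbK.
case: (boolP (r p)) => rp; last by rewrite !mul0r.
rewrite -(swap_merge (j:=j)) // Finv //.
apply: subset_trans (tperm_on j p) _; apply/subsetP => i; rewrite !inE => /orP[] /eqP ->//.
by apply: (subsetP ES).
Qed.

Lemma flip_step n (S E : {set 'I_n}) (Fn : {ffun 'I_n -> bool} -> R) (y : {ffun 'I_n -> bool}) j :
  E \subset S ->
  (forall z, 0 <= Fn z <= 1) ->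
  (forall s z, perm_on S s -> Fn (permx s z) = Fn z) ->
  j \in E -> y j ->
  `|Tavg E Fn y - Tavg E Fn (flip j y)| * Num.sqrt (#|S :\: E|%:R) <= 2.
Proof.
move=> ES F01 Finv jE yj.
set V := S :\: E; set N : R := #|V|%:R.
set F := fun r => Fn (merge E y r); set Fm := fun r => Fn (merge E (flip j y) r).
set w := fun r : {ffun 'I_n -> bool} => ((wt V r)%:R : R).
have key : avgX (fun r => (N - w r) * F r) = avgX (fun r => w r * Fm r).
  have e1 r : (N - w r) * F r = \sum_(p in V) (~~ r p)%:R * F r.
    rewrite -mulr_suml; congr (_ * _); rewrite /N /w wt_sum -sum1_card natr_sum -sumrB.
    by apply: eq_bigr => p _; case: (r p); rewrite /= ?subrr ?subr0.
  have e2 r : w r * Fm r = \sum_(p in V) (r p)%:R * Fm r.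
    by rewrite -mulr_suml /w wt_sum.
  rewrite (avgX_ext e1) (avgX_ext e2) !avgX_sum; apply: eq_bigr => p pV.
  exact: (flip_identity ES Finv jE yj pV).
set a := Tavg E Fn y; set b := Tavg E Fn (flip j y).
set c := avgX (fun r => (w r - N / 2) * F r).
set d := avgX (fun r => (w r - N / 2) * Fm r).
have hab : N / 2 * (a - b) = c + d.
  have ea : avgX (fun r => (N - w r) * F r) = N / 2 * a - c.
    rewrite /a /Tavg -/F /c -avgX_scale -avgX_sub; apply: avgX_ext => z; move: (w z) (F z) => u v; by field.
  have eb : avgX (fun r => w r * Fm r) = N / 2 * b + d.
    rewrite /b /Tavg -/Fm /d -avgX_scale -avgX_add; apply: avgX_ext => z; move: (w z) (Fm z) => u v; by field.
  move: key; rewrite ea eb => h; rewrite mulrBr.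
  have -> : N / 2 * a = N / 2 * b + d + c by rewrite -h; by field.
  by field.
have bnd (G : {ffun 'I_n -> bool} -> R) : (forall r, 0 <= G r <= 1) ->
    `|avgX (fun r => (w r - N / 2) * G r)| <= Num.sqrt N / 2.
  move=> G01; apply: le_trans (avgX_norm _) _.
  apply: le_trans (avg_abs_dev V); apply: avgX_le => r.
  rewrite normrM -[X in _ <= X]mulr1 ler_wpM2l //.
  by have /andP[g0 g1] := G01 r; rewrite ger0_norm.
have hc := bnd F (fun r => F01 _); have hd := bnd Fm (fun r => F01 _).
have h2 : N / 2 * `|a - b| <= Num.sqrt N.
  have -> : N / 2 * `|a - b| = `|c + d|.
    by rewrite -hab normrM ger0_norm // divr_ge0 ?ler0n.
  apply: le_trans (ler_normD _ _) _; lra.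
case: (posnP #|V|) => [V0|Vpos].
  by rewrite /N V0 mulr0n sqrtr0 mulr0.
have N0 : 0 < N by rewrite /N ltr0n.
have sN : Num.sqrt N ^+ 2 = N by rewrite sqr_sqrtr // ltW.
have sN0 : 0 < Num.sqrt N by rewrite sqrtr_gt0.
move: h2; rewrite -{1}sN => h2.
have : Num.sqrt N * (`|a - b| * Num.sqrt N - 2) <= 0.
  have -> : Num.sqrt N * (`|a - b| * Num.sqrt N - 2) = 2 * (Num.sqrt N ^+ 2 / 2 * `|a - b| - Num.sqrt N) by field.
  by rewrite pmulr_rle0 // subr_le0.
by rewrite pmulr_rle0 // subr_le0.
Qed.


Lemma wt_ext n (E : {set 'I_n}) (u v : {ffun 'I_n -> bool}) :
  (forall i, i \in E -> u i = v i) -> wt E u = wt E v.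
Proof.
move=> H; rewrite /wt; apply: eq_card => i; rewrite !inE.
by case: (boolP (i \in E)) => //= iE; rewrite H.
Qed.

Lemma wt_flip n (E : {set 'I_n}) (y : {ffun 'I_n -> bool}) j :
  j \in E -> y j -> wt E y = (wt E (flip j y)).+1.
Proof.
move=> jE yj; rewrite /wt (cardsD1 j) inE jE yj /= add1n; congr (_.+1).
apply: eq_card => i; rewrite !inE !ffunE.
by case: (eqVneq i j) => [->|] /=; rewrite ?yj ?andbF // andbT.
Qed.

Lemma T_sameweight n (S E : {set 'I_n}) (Fn : {ffun 'I_n -> bool} -> R) (y y' : {ffun 'I_n -> bool}) :
  E \subset S -> (forall s z, perm_on S s -> Fn (permx s z) = Fn z) ->
  wt E y = wt E y' -> Tavg E Fn y = Tavg E Fn y'.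
Proof.
move=> ES Finv Hw.
have [rho prho Erho] : exists2 s, perm_on E s & merge E y' y = permx s (merge E y y).
  apply: transitive_lemma.
    by move=> i iE; rewrite !ffunE (negbTE iE).
  rewrite (@wt_ext _ E (merge E y y) y); last by move=> i iE; rewrite ffunE iE.
  by rewrite Hw; apply: wt_ext => i iE; rewrite ffunE iE.
have key r : merge E y' r = permx rho (merge E y r).
  apply/ffunP => i; rewrite permxE.
  case: (boolP (i \in E)) => iE.
    have := congr1 (fun f : {ffun 'I_n -> bool} => f i) Erho.
    rewrite /= permxE !ffunE iE (perm_closed _ (perm_onV prho)) iE => ->.
    by [].
  by rewrite (out_perm (perm_onV prho) iE) !ffunE (negbTE iE).
rewrite /Tavg; apply: avgX_ext => r; rewrite key Finv //.
by apply: subset_trans ES.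
Qed.



Lemma T_weight n (S E : {set 'I_n}) (Fn : {ffun 'I_n -> bool} -> R) (y y' : {ffun 'I_n -> bool}) :
  E \subset S -> (forall z, 0 <= Fn z <= 1) ->
  (forall s z, perm_on S s -> Fn (permx s z) = Fn z) ->
  `|Tavg E Fn y - Tavg E Fn y'| * Num.sqrt (#|S :\: E|%:R) <= 2 * `|(wt E y)%:R - (wt E y')%:R|.
Proof.
move=> ES F01 Finv.
suff H : forall k (y y' : {ffun 'I_n -> bool}), wt E y = (wt E y' + k)%nat ->
    `|Tavg E Fn y - Tavg E Fn y'| * Num.sqrt (#|S :\: E|%:R) <= 2 * k%:R.
  case: (leqP (wt E y') (wt E y)) => h.
    have H1 := H _ y y' (esym (subnKC h)).
    apply: (le_trans H1); rewrite (natrB _ h).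
    by rewrite ler_pM2l ?ltr0n // ler_norm.
  have h' := ltnW h.
  have H1 := H _ y' y (esym (subnKC h')).
  rewrite distrC [X in _ <= 2 * X]distrC.
  apply: (le_trans H1); rewrite (natrB _ h').
  by rewrite ler_pM2l ?ltr0n // ler_norm.
elim => [|k IH] z z' Hw.
  by rewrite addn0 in Hw; rewrite (T_sameweight ES Finv Hw) subrr normr0 mul0r mulr0.
have : (0 < wt E z)%nat by rewrite Hw addnS.
rewrite /wt card_gt0 => /set0Pn [j]; rewrite inE => /andP[jE zj].
have Hw' : wt E (flip j z) = (wt E z' + k)%nat.
  by move: Hw; rewrite (wt_flip jE zj) addnS => -[].
have h1 := flip_step ES F01 Finv jE zj.
have h2 := IH _ _ Hw'.
have -> : Tavg E Fn z - Tavg E Fn z' = (Tavg E Fn z - Tavg E Fn (flip j z)) + (Tavg E Fn (flip j z) - Tavg E Fn z') by ring.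
set A := Tavg E Fn z - Tavg E Fn (flip j z).
set B := Tavg E Fn (flip j z) - Tavg E Fn z'.
set s := Num.sqrt _.
have s0 : 0 <= s by apply: sqrtr_ge0.
have hn : `|A + B| <= `|A| + `|B| by apply: ler_normD.
have h3 : `|A + B| * s <= `|A| * s + `|B| * s by rewrite -mulrDl; apply: ler_wpM2r.
have hk : (k.+1)%:R = k%:R + 1 :> R by rewrite natr1.
move: h1 h2 h3; rewrite -/A -/B -/s => h1 h2 h3.
rewrite hk; lra.
Qed.


Lemma avgX_mulr n (F : {ffun 'I_n -> bool} -> R) c : avgX (fun x => F x * c) = avgX F * c.
Proof. by rewrite mulrC -avgX_scale; apply: avgX_ext => x; rewrite mulrC. Qed.

Lemma C2 n (S E : {set 'I_n}) (Fam : {ffun 'I_n -> bool} -> {ffun 'I_n -> bool} -> R) :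
  E \subset S ->
  (forall y x, 0 <= Fam y x <= 1) ->
  (forall y y' z : {ffun 'I_n -> bool}, (forall i, i \in E -> y i = y' i) -> Fam y z = Fam y' z) ->
  `|avgX (fun y => avgG S (fun s => Fam y (permx s y))) - avgX (fun y => avgX (Fam y))|
     * Num.sqrt (#|S :\: E|%:R) <= 2 * Num.sqrt (#|E|%:R).
Proof.
move=> ES F01 Fdep.
pose Pb y z := avgG S (fun s => Fam y (permx s z)).
have Pb01 y z : 0 <= Pb y z <= 1.
  apply/andP; split.
    rewrite -(avgG_const S 0); apply: avgG_le => s _.
    by have /andP[] := F01 y (permx s z).
  rewrite -(avgG_const S 1); apply: avgG_le => s _.
  by have /andP[] := F01 y (permx s z).
have Pbinv y s z : perm_on S s -> Pb y (permx s z) = Pb y z.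
  move=> ps; rewrite /Pb.
  transitivity (avgG S (fun t => Fam y (permx (s * t)%g z))).
    by apply: avgG_ext => t _; rewrite permx_mul.
  by rewrite (avgG_mull (fun u => Fam y (permx u z))) // inSG.
have Pbdep : forall y y' z : {ffun 'I_n -> bool}, (forall i, i \in E -> y i = y' i) -> Pb y z = Pb y' z.
  by move=> y y' z H; rewrite /Pb; apply: avgG_ext => s _; apply: Fdep.
have L1 : avgX (fun y => avgG S (fun s => Fam y (permx s y))) = avgX (fun y => Tavg E (Pb y) y).
  exact: (T_diag Pbdep).
have R1 : avgX (fun y => avgX (Fam y)) = avgX (fun y => avgX (fun y' => Tavg E (Pb y) y')).
  apply: avgX_ext => y; rewrite T_total /Pb avgXG_swap.
  transitivity (avgG S (fun _ => avgX (Fam y))); first by rewrite avgG_const.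
  apply: avgG_ext => s _.
  by rewrite (avgX_bij (Fam y) (can_inj (@permxK n s))).
rewrite L1 R1.
set D := fun y y' => Tavg E (Pb y) y - Tavg E (Pb y) y'.
have -> : avgX (fun y => Tavg E (Pb y) y) - avgX (fun y => avgX (fun y' => Tavg E (Pb y) y'))
   = avgX (fun y => avgX (D y)).
  rewrite -avgX_sub; apply: avgX_ext => y.
  by rewrite /D avgX_sub avgX_const.
set s := Num.sqrt _.
have s0 : 0 <= s by apply: sqrtr_ge0.
set e := (#|E|%:R : R).
pose w y := ((wt E y)%:R : R).
have step1 : `|avgX (fun y => avgX (D y))| * s <= avgX (fun y => avgX (fun y' => `|D y y'| * s)).
  apply: le_trans (ler_wpM2r s0 (avgX_norm _)) _.
  rewrite -avgX_mulr; apply: avgX_le => y.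
  apply: le_trans (ler_wpM2r s0 (avgX_norm _)) _.
  by rewrite -avgX_mulr.
have step2 : avgX (fun y => avgX (fun y' => `|D y y'| * s))
    <= avgX (fun y => avgX (fun y' => 2 * (`|w y - e / 2| + `|w y' - e / 2|))).
  apply: avgX_le => y; apply: avgX_le => y'.
  apply: le_trans (T_weight y y' ES (Pb01 y) (Pbinv y)) _.
  rewrite ler_pM2l ?ltr0n //.
  have -> : (wt E y)%:R - (wt E y')%:R = (w y - e / 2) - (w y' - e / 2) :> R by rewrite /w; by field.
  by apply: le_trans (ler_normB _ _) _.
have step3 : avgX (fun y => avgX (fun y' => 2 * (`|w y - e / 2| + `|w y' - e / 2|)))
    = 2 * (avgX (fun y => `|w y - e / 2|) + avgX (fun y => `|w y - e / 2|)).
  transitivity (avgX (fun y => 2 * (`|w y - e / 2| + avgX (fun y' => `|w y' - e / 2|)))).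
    by apply: avgX_ext => y; rewrite avgX_scale avgX_add avgX_const.
  by rewrite avgX_scale avgX_add avgX_const.
have hd := avg_abs_dev E; rewrite -/e in hd.
apply: le_trans step1 _; apply: le_trans step2 _; rewrite step3.
rewrite ler_pM2l ?ltr0n //.
have -> : avgX (fun y => `|w y - e / 2|) = avgX (fun r => `|(wt E r)%:R - e / 2|) by [].
lra.
Qed.


Definition Phi n (f : {ffun 'I_n -> bool} -> bool) (x y : {ffun 'I_n -> bool}) : R :=
  (f x != f y)%:R.

Lemma Phi01 n f (x y : {ffun 'I_n -> bool}) : 0 <= Phi f x y <= 1.
Proof. by rewrite /Phi; case: (f x != f y); rewrite /= ?mulr1n ?mulr0n ?lexx ?ler01. Qed.

Lemma Phi_tri n f (x y z : {ffun 'I_n -> bool}) : Phi f x z <= Phi f x y + Phi f y z.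
Proof. by rewrite /Phi; case: (f x); case: (f y); case: (f z); rewrite /= ?mulr1n ?mulr0n; lra. Qed.

Lemma SymInfE n f (S : {set 'I_n}) :
  SymInf f S = avgX (fun x => avgG S (fun s => Phi f x (permx s x))).
Proof.
rewrite /SymInf RdivE /avgX /avgG.
have -> : #|[set p : {ffun 'I_n -> bool} * {perm 'I_n} | (p.2 \in SymGroup S) && (f p.1 != f (permx p.2 p.1))]|%:R
   = \sum_x \sum_(s in SymGroup S) Phi f x (permx s x).
  rewrite -sum1_card natr_sum big_mkcond /=.
  symmetry; rewrite (eq_bigr _ (fun x _ => big_mkcond _ _)) pair_big /=.
  apply: eq_bigr => -[x s] _ /=.
  rewrite !inE /= /Phi; case: (perm_on S s) => //=; by case: (f x != f (permx s x)).
by rewrite natrM invfM -mulr_suml -mulrA [_^-1 * _^-1]mulrC.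
Qed.

Lemma SymInf01 n f (S : {set 'I_n}) : 0 <= SymInf f S <= 1.
Proof.
rewrite SymInfE; apply/andP; split.
  rewrite -(avgX_const n 0); apply: avgX_le => x.
  rewrite -(avgG_const S 0); apply: avgG_le => s _; by have /andP[] := Phi01 f x (permx s x).
rewrite -(avgX_const n 1); apply: avgX_le => x.
rewrite -(avgG_const S 1); apply: avgG_le => s _; by have /andP[] := Phi01 f x (permx s x).
Qed.

Definition Gf n f (K : {set 'I_n}) (x y : {ffun 'I_n -> bool}) : R :=
  avgG K (fun t => Phi f x (permx t y)).

Lemma Gf01 n f (K : {set 'I_n}) x y : 0 <= Gf f K x y <= 1.
Proof.
apply/andP; split.
  rewrite -(avgG_const K 0); apply: avgG_le => s _; by have /andP[] := Phi01 f x (permx s y).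
rewrite -(avgG_const K 1); apply: avgG_le => s _; by have /andP[] := Phi01 f x (permx s y).
Qed.

Lemma Gf_inv n f (K : {set 'I_n}) x y k : perm_on K k -> Gf f K x (permx k y) = Gf f K x y.
Proof.
move=> pk; rewrite /Gf.
transitivity (avgG K (fun t => Phi f x (permx (k * t)%g y))).
  by apply: avgG_ext => t _; rewrite permx_mul.
by rewrite (avgG_mull (fun u => Phi f x (permx u y))) // inSG.
Qed.

Lemma triangle n f (J K : {set 'I_n}) :
  avgX (fun x => avgG J (fun s => Gf f K x (permx s x))) <= SymInf f J + SymInf f K.
Proof.
rewrite !SymInfE /Gf.
set Q1 := avgX (fun x => avgG J (fun s => Phi f x (permx s x))).
set Q2 := avgX (fun x => avgG K (fun s => Phi f x (permx s x))).
have h : avgX (fun x => avgG J (fun s => avgG K (fun t => Phi f x (permx t (permx s x)))))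
   <= avgX (fun x => avgG J (fun s => avgG K (fun t => Phi f x (permx s x) + Phi f (permx s x) (permx t (permx s x))))).
  apply: avgX_le => x; apply: avgG_le => s _; apply: avgG_le => t _; exact: Phi_tri.
apply: le_trans h _.
have -> : avgX (fun x => avgG J (fun s => avgG K (fun t => Phi f x (permx s x) + Phi f (permx s x) (permx t (permx s x)))))
   = Q1 + avgG J (fun s => avgX (fun x => avgG K (fun t => Phi f (permx s x) (permx t (permx s x))))).
  rewrite /Q1 -avgXG_swap -avgX_add; apply: avgX_ext => x; rewrite -avgG_add.
  by apply: avgG_ext => s _; rewrite avgG_add avgG_const.
rewrite lerD2l.
have -> : avgG J (fun s => avgX (fun x => avgG K (fun t => Phi f (permx s x) (permx t (permx s x))))) = Q2.
  transitivity (avgG J (fun _ => Q2)); last by rewrite avgG_const.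
  apply: avgG_ext => s _; rewrite /Q2.
  exact: (avgX_bij (fun z => avgG K (fun t => Phi f z (permx t z))) (can_inj (@permxK n s))).
by [].
Qed.


Lemma absorb n f (K L : {set 'I_n}) : K \subset L ->
  SymInf f L = avgX (fun x => avgG L (fun s => Gf f K x (permx s x))).
Proof.
move=> KL; rewrite SymInfE; apply: avgX_ext => x; rewrite /Gf avgGG_swap.
transitivity (avgG K (fun _ => avgG L (fun s => Phi f x (permx s x)))); first by rewrite avgG_const.
apply: avgG_ext => t tK.
transitivity (avgG L (fun s => Phi f x (permx (s * t)%g x))).
  by rewrite (avgG_mulr (fun u => Phi f x (permx u x))) // (SG_sub KL).
by apply: avgG_ext => s _; rewrite permx_mul.
Qed.

Lemma cov n (S : {set 'I_n}) (H : {ffun 'I_n -> bool} -> {ffun 'I_n -> bool} -> R) :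
  avgX (fun x => avgG S (fun s => H x (permx s x))) = avgX (fun y => avgG S (fun s => H (permx s y) y)).
Proof.
rewrite !avgXG_swap -[RHS]avgG_inv; apply: avgG_ext => s _.
rewrite -(avgX_bij _ (can_inj (@permxKV n s))).
by apply: avgX_ext => y; rewrite permxKV.
Qed.

Lemma wt_split n (K L : {set 'I_n}) u : K \subset L -> wt L u = (wt (L :\: K) u + wt K u)%nat.
Proof.
move=> KL; rewrite /wt -(cardsID K [set i in L | u i]) addnC; congr (_ + _)%nat.
  by apply: eq_card => i; rewrite !inE; case: (i \in K); case: (i \in L); case: (u i).
apply: eq_card => i; rewrite !inE.
by case: (boolP (i \in K)) => iK; rewrite ?andbT ?andbF //= (subsetP KL _ iK).
Qed.

Definition inLcls n (L : {set 'I_n}) (x z : {ffun 'I_n -> bool}) : bool :=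
  [forall i, (i \notin L) ==> (z i == x i)] && (wt L z == wt L x).
Definition agreeE n (E : {set 'I_n}) (z y : {ffun 'I_n -> bool}) : bool :=
  [forall i, (i \in E) ==> (z i == y i)].
Definition Gam n f (K L : {set 'I_n}) (x y : {ffun 'I_n -> bool}) : R :=
  if [pick z | inLcls L x z && agreeE (L :\: K) z y] is Some z then Gf f K x z else 0.

Lemma Gam_eq n f (K L : {set 'I_n}) x y z0 : K \subset L ->
  inLcls L x z0 -> agreeE (L :\: K) z0 y -> Gam f K L x y = Gf f K x z0.
Proof.
move=> KL Hz0 Ha0; rewrite /Gam; case: pickP => [z /andP[Hz Ha]|H]; last first.
  by have := H z0; rewrite Hz0 Ha0.
move: Hz Hz0 => /andP[/forallP Hz /eqP Wz] /andP[/forallP Hz0 /eqP Wz0].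
move: Ha Ha0 => /forallP Ha /forallP Ha0.
have off : forall i, i \notin K -> z i = z0 i.
  move=> i iK; case: (boolP (i \in L)) => iL.
    have iE : i \in L :\: K by rewrite inE iK iL.
    by move: (Ha i) (Ha0 i); rewrite iE /= => /eqP -> /eqP ->.
  by move: (Hz i) (Hz0 i); rewrite iL /= => /eqP -> /eqP ->.
have wK : wt K z = wt K z0.
  have := wt_split z KL; have := wt_split z0 KL; rewrite Wz Wz0 => ->.
  have -> : wt (L :\: K) z = wt (L :\: K) z0.
    apply: wt_ext => i iE; move: (Ha i) (Ha0 i); rewrite iE /= => /eqP -> /eqP -> //.
  by move/eqP; rewrite eqn_add2l => /eqP.
have [k pk Ek] := transitive_lemma off wK.
by rewrite Ek Gf_inv.
Qed.

Lemma Gam01 n f (K L : {set 'I_n}) x y : 0 <= Gam f K L x y <= 1.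
Proof. by rewrite /Gam; case: pickP => [z _|_]; [apply: Gf01|rewrite lexx ler01]. Qed.

Lemma Gam_dep n f (K L : {set 'I_n}) (x y y' : {ffun 'I_n -> bool}) : (forall i, i \in L :\: K -> y i = y' i) ->
  Gam f K L x y = Gam f K L x y'.
Proof.
move=> H; rewrite /Gam (@eq_pick _ _ (fun z => inLcls L x z && agreeE (L :\: K) z y')) //.
move=> z /=; congr (_ && _); apply: eq_forallb => i.
by case: (boolP (i \in L :\: K)) => //= iE; rewrite H.
Qed.

Lemma D_to_Gam n f (S K L : {set 'I_n}) : K \subset L -> S \subset L ->
  avgX (fun x => avgG S (fun s => Gf f K x (permx s x)))
  = avgX (fun y => avgG S (fun s => Gam f K L (permx s y) y)).
Proof.
move=> KL SL; rewrite cov; apply: avgX_ext => y; apply: avgG_ext => s sS.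
have psL : perm_on L s by rewrite -inSG (SG_sub SL).
rewrite (@Gam_eq n f K L (permx s y) y y) //.
  apply/andP; split.
    by apply/forallP => i; apply/implyP => iL; rewrite (permx_out _ psL iL).
  by rewrite wt_permx.
by apply/forallP => i; apply/implyP.
Qed.


Lemma numeric (a g u s : R) : 0 <= a -> 0 < u -> u / 2 <= s -> a * s <= 2 * (g * u) -> a <= 4 * g.
Proof.
move=> a0 u0 us h.
have h1 : a * (u / 2) <= a * s by apply: ler_wpM2l.
have h2 : u * (a - 4 * g) <= 0 by nra.
by move: h2; rewrite pmulr_rle0 // subr_le0.
Qed.

Lemma core n f (J K : {set 'I_n}) (g : R) : (0 < n)%nat -> 0 < g -> g < 1/4 ->
    (1 - g) * n%:R <= #|J|%:R -> (1 - g) * n%:R <= #|K|%:R ->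
    SymInf f (J :|: K) <= SymInf f J + SymInf f K + 8 * Num.sqrt g.
Proof.
move=> n0 g0 g1 hJ hK.
set L := J :|: K; set E := L :\: K.
have KL : K \subset L by apply: subsetUr.
have JL : J \subset L by apply: subsetUl.
have EJ : E \subset J.
  by apply/subsetP => i; rewrite !inE => /andP[iK /orP[]] //; rewrite (negbTE iK).
have EL : E \subset L by apply: subsetDl.
set DL := avgX (fun x => avgG L (fun s => Gf f K x (permx s x))).
set DJ := avgX (fun x => avgG J (fun s => Gf f K x (permx s x))).
have eL : SymInf f L = DL by apply: absorb.
have tri : DJ <= SymInf f J + SymInf f K by apply: triangle.
pose Fam y x := Gam f K L x y.
have F01 y x : 0 <= Fam y x <= 1 by apply: Gam01.
have Fdep (y y' z : {ffun 'I_n -> bool}) : (forall i, i \in E -> y i = y' i) -> Fam y z = Fam y' z.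
  by move=> H; apply: Gam_dep.
set Ref := avgX (fun y => avgX (Fam y)).
have cL := C2 EL F01 Fdep.
have cJ := C2 EJ F01 Fdep.
rewrite -/Ref in cL cJ.
have dL : DL = avgX (fun y => avgG L (fun s => Fam y (permx s y))) by apply: D_to_Gam.
have dJ : DJ = avgX (fun y => avgG J (fun s => Fam y (permx s y))) by apply: D_to_Gam.
rewrite -dL in cL; rewrite -dJ in cJ.
set e : R := #|E|%:R.
set NJ : R := #|J :\: E|%:R.
set NL : R := #|L :\: E|%:R.
set nR : R := n%:R.
have hEK : (#|E| + #|K| <= n)%nat.
  have h1 : (#|E| <= #|~: K|)%nat.
    by apply: subset_leq_card; apply/subsetP => i; rewrite !inE => /andP[].
  have h2 := cardsC K; rewrite card_ord in h2.
  by apply: leq_trans (leq_add h1 (leqnn #|K|)) _; rewrite addnC h2.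
have hEKr : e + #|K|%:R <= nR by rewrite /e /nR -natrD ler_nat.
have hNJ : NJ = #|J|%:R - e.
  rewrite /NJ cardsD (setIidPr EJ) natrB //.
  exact: subset_leq_card.
have hNL : NJ <= NL by rewrite /NJ /NL ler_nat; apply: subset_leq_card; apply: setSD.
have nR0 : 0 < nR by rewrite /nR ltr0n.
have eg : e <= g * nR by lra.
have NJn : nR / 4 <= NJ by rewrite hNJ; nra.
have su : 0 < Num.sqrt nR by rewrite sqrtr_gt0.
have NJ0 : 0 <= NJ by apply: (le_trans _ NJn); rewrite divr_ge0 // ltW.
have sqn : Num.sqrt nR / 2 <= Num.sqrt NJ.
  have -> : Num.sqrt nR / 2 = Num.sqrt ((Num.sqrt nR / 2) ^+ 2).
    by rewrite sqrtr_sqr ger0_norm // divr_ge0 // ltW.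
  rewrite ler_sqrt // expr_div_n sqr_sqrtr; last exact: ltW.
  apply: (le_trans _ NJn); have -> : (2 : R) ^+ 2 = 4 by rewrite expr2; lra.
  by [].
have sqnL : Num.sqrt nR / 2 <= Num.sqrt NL.
  by apply: (le_trans sqn); rewrite ler_sqrt // (le_trans NJ0 hNL).
have se : Num.sqrt e <= Num.sqrt g * Num.sqrt nR.
  rewrite -(sqrtrM _ (ltW g0)) ler_sqrt // mulr_ge0 // ltW //.
have aL : `|DL - Ref| <= 4 * Num.sqrt g.
  apply: (numeric (normr_ge0 _) su sqnL); apply: le_trans cL _; lra.
have aJ : `|DJ - Ref| <= 4 * Num.sqrt g.
  apply: (numeric (normr_ge0 _) su sqn); apply: le_trans cJ _; lra.
rewrite eL.
have : DL - DJ <= `|DL - Ref| + `|DJ - Ref|.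
  apply: le_trans (ler_norm _) _.
  have -> : DL - DJ = (DL - Ref) - (DJ - Ref) by ring.
  exact: ler_normB.
lra.
Qed.


Lemma lemma5_aux :
  exists c : R, forall (n : nat) (gamma : R)
    (f : {ffun 'I_n -> bool} -> bool) (J K : {set 'I_n}),
    0 < gamma -> gamma < 1 ->
    (1 - gamma) * n%:R <= #|J|%:R ->
    (1 - gamma) * n%:R <= #|K|%:R ->
    SymInf f (J :|: K) <= SymInf f J + SymInf f K + c * Num.sqrt gamma.
Proof.
exists 8 => n gamma f J K g0 g1 hJ hK.
have /andP[sJ0 sJ1] := SymInf01 f J.
have /andP[sK0 sK1] := SymInf01 f K.
have /andP[sL0 sL1] := SymInf01 f (J :|: K).
have sq0 : 0 <= Num.sqrt gamma by apply: sqrtr_ge0.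
case: (ltP gamma (1/4)) => hg.
  case: (posnP n) => [n0|npos]; last exact: core.
  have -> : J :|: K = J.
    apply/setP => i; exfalso; have := ltn_ord i; move: (nat_of_ord i) => m; by rewrite n0 ltn0.
  lra.
have : 1 / 2 <= Num.sqrt gamma.
  have -> : (1 / 2 : R) = Num.sqrt ((1 / 2) ^+ 2) by rewrite sqrtr_sqr ger0_norm //; lra.
  rewrite ler_sqrt; last exact: ltW.
  by have -> : ((1 / 2) ^+ 2 : R) = 1 / 4 by rewrite expr2; field.
lra.
Qed.

From Stdlib Require Import Rdefinitions.

Theorem lemma5 :
  exists c : R, forall (n : nat) (gamma : R)
    (f : {ffun 'I_n -> bool} -> bool) (J K : {set 'I_n}),
    0 < gamma -> gamma < 1 ->
    (1 - gamma) * n%:R <= #|J|%:R ->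
    (1 - gamma) * n%:R <= #|K|%:R ->
    SymInf f (J :|: K) <= SymInf f J + SymInf f K + c * Num.sqrt gamma.
Proof. exact: lemma5_aux. Qed.
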